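(* Let $n$ be a positive integer. Let $R_n\subseteq T_n$ be the set of triples $(A,B,C)\in T_n$ with $C$ empty, and let $D_n^0\subseteq D_n$ be the set of pairs $(H,X)\in D_n$ with $X$ on the horizontal axis. Define $r:R_n\to D_n^0$ by $r(A,B,\emptyset)=(H,X)$, where $H$ is the concatenation of $A$ and $B$ and $X$ is the point at which $A$ and $B$ meet. Then $r$ is a bijection.
   Context: A lattice path here is a finite (possibly empty) sequence of steps, each an up step $(1,1)$ or a down step $(1,-1)$, drawn as a polygonal line from a given starting lattice point; its lattice points are its starting point and the endpoints of its steps. $T_n$ is the set of ordered triples $(A,B,C)$ of lattice paths such that for some nonnegative integers $i,j,k$ with $i+j+k=n$, $A$ has $i$ up and $i$ down steps, $B$ has $j$ up and $j$ down steps, and $C$ has $k$ up and $k$ down steps. $D_n$ is the set of pairs $(H,X)$ where $H$ is a lattice path with $n$ up steps and $n$ down steps drawn from $(0,0)$ to $(2n,0)$ and $X$ is one of the $2n+1$ lattice points of $H$. The concatenation of paths is obtained by drawing them successively, each starting at the endpoint of the preceding one, the first starting at $(0,0)$. *)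

(* Defs.v *)
From mathcomp Require Import all_boot all_order all_algebra.
Set Implicit Arguments. Unset Strict Implicit. Unset Printing Implicit Defensive.
Import GRing.Theory Num.Theory.
Local Open Scope ring_scope.

(* A lattice lpath is its sequence of steps: true = up step (1,1),
   false = down step (1,-1). *)
Definition lpath := seq bool.
Definition point := (int * int)%type.

Definition step_dy (b : bool) : int := if b then 1 else -1.

Definition height (p : lpath) : int := \sum_(b <- p) step_dy b.

Definition nups (p : lpath) : nat := count id p.
Definition ndowns (p : lpath) : nat := count negb p.

Definition lattice_points (p : lpath) : seq point :=
  [seq ((k%:Z), height (take k p)) | k <- iota 0 (size p).+1].

Definition in_T (n : nat) (t : lpath * lpath * lpath) : Prop :=
  let: (A, B, C) := t in
  exists i j k : nat, (i + j + k)%N = n /\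
    nups A = i /\ ndowns A = i /\ nups B = j /\ ndowns B = j /\
    nups C = k /\ ndowns C = k.

Definition in_R (n : nat) (t : lpath * lpath * lpath) : Prop :=
  in_T n t /\ t.2 = [::].

Definition in_D (n : nat) (d : lpath * point) : Prop :=
  let: (H, X) := d in
  nups H = n /\ ndowns H = n /\ X \in lattice_points H.

Definition in_D0 (n : nat) (d : lpath * point) : Prop :=
  in_D n d /\ d.2.2 = 0.

Definition r (t : lpath * lpath * lpath) : lpath * point :=
  let: (A, B, _) := t in (A ++ B, ((size A)%:Z, height A)).

(* Main.v *)
Require Import Defs.
From mathcomp Require Import all_boot all_order all_algebra.
From mathcomp Require Import zify.
Import GRing.Theory Num.Theory.

Lemma heightE (p : lpath) : height p = ((nups p)%:Z - (ndowns p)%:Z)%R.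
Proof.
elim: p => [|b p IH]; first by rewrite /height big_nil.
rewrite /height big_cons -/(height p) IH /nups /ndowns /=.
case: b => /=; rewrite /step_dy ?add0n ?add1n; lia.
Qed.

Lemma count_upsdowns (p : lpath) : (nups p + ndowns p)%N = size p.
Proof. by rewrite /nups /ndowns -(count_predC id p). Qed.

Theorem proposition1 (n : nat) (hn : (0 < n)%N) :
  (forall t, in_R n t -> in_D0 n (r t)) /\
  (forall t1 t2, in_R n t1 -> in_R n t2 -> r t1 = r t2 -> t1 = t2) /\
  (forall d, in_D0 n d -> exists t, in_R n t /\ r t = d).
Proof.
split.
  move=> [[A B] C] [[i [j [k [Hn [a1 [a2 [b1 [b2 [c1 c2]]]]]]]]] /= HC].
  rewrite /in_D0 /in_D /=; split; last by rewrite heightE a1 a2 subrr.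
  rewrite /nups /ndowns !count_cat -/(nups A) -/(nups B) -/(ndowns A) -/(ndowns B).
  subst C; rewrite /nups /= in c1; rewrite /ndowns /= in c2.
  split; first lia. split; first lia.
  apply/mapP; exists (size A); first by rewrite mem_iota size_cat; lia.
  by rewrite take_size_cat.
split.
  move=> [[A B] C] [[A' B'] C'] [_ /= ->] [_ /= ->] /= [E1 E2 _].
  have Es : size A = size A' by case: E2 => ->.
  have := congr1 (take (size A)) E1; rewrite take_size_cat // Es take_size_cat // => ->.
  have := congr1 (drop (size A)) E1; rewrite drop_size_cat // Es drop_size_cat // => ->.
  by [].
move=> [H X] [[u [d Hx]] /= X0].
case/mapP: Hx => k; rewrite mem_iota add0n => Hk EX.
have hA : height (take k H) = 0%R by rewrite -X0 EX.
move: hA; rewrite heightE => /eqP; rewrite subr_eq0 => /eqP [] hA.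
have cu := count_cat id (take k H) (drop k H).
have cd := count_cat negb (take k H) (drop k H).
rewrite cat_take_drop in cu cd.
exists (take k H, drop k H, [::]); split.
  split=> //=.
  exists (nups (take k H)), (n - nups (take k H))%N, 0%N.
  rewrite /nups /ndowns in u d hA * ; do ! split => //; lia.
rewrite /r cat_take_drop EX size_takel //; lia.
Qed.
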